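(* Let $\alpha$ be an ordinal number such that either $\Pi(\Pi_\alpha\mathcal A)=\Pi_\alpha\mathcal A=\Sigma(\Pi_\alpha\mathcal A)$, or $\Pi(\Sigma_\alpha\mathcal A)=\Sigma_\alpha\mathcal A=\Sigma(\Sigma_\alpha\mathcal A)$. Then $\alpha$ is uncountable.
   Context: $\mathbb N=\{1,2,\dots\}$, and $\mathbb N^{\mathbb N}$ is the Baire space. For $m,n\in\mathbb N$ let $B^m_n=\{f\in\mathbb N^{\mathbb N}: f(n)=m\}$. $\mathcal A$ is the family of all sets $T_1\cup\dots\cup T_L$ ($L\in\mathbb N$), each $T_\ell$ a finite intersection $S_1\cap\dots\cap S_K$ ($K\in\mathbb N$) of sets of the form $B^m_n$ or $\mathbb N^{\mathbb N}\setminus B^m_n$. For a family $\mathcal X$ of subsets of $\mathbb N^{\mathbb N}$, $\Pi(\mathcal X)$ is the family of all countable intersections $\bigcap_n X_n$ and $\Sigma(\mathcal X)$ that of all countable unions $\bigcup_n X_n$ with $X_n\in\mathcal X$. Define by transfinite recursion $\Pi_0\mathcal A=\Sigma_0\mathcal A=\mathcal A$, $\Pi_{\beta+1}\mathcal A=\Pi(\Sigma_\beta\mathcal A)$, $\Sigma_{\beta+1}\mathcal A=\Sigma(\Pi_\beta\mathcal A)$, and for limit $\lambda$, $\Pi_\lambda\mathcal A=\bigcup_{\beta<\lambda}\Pi_\beta\mathcal A$, $\Sigma_\lambda\mathcal A=\bigcup_{\beta<\lambda}\Sigma_\beta\mathcal A$. (In the paper's terminology, the two hypotheses say that the hierarchy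 of extensions of the zero valuation on $\mathcal A$ has collapsed at $\Pi_\alpha\mathcal A$, resp. at $\Sigma_\alpha\mathcal A$.) *)

(* Defs.v *)
From Stdlib Require Import List.
Import ListNotations.

(* Baire space: N^N.  We index from 0 (nat -> nat); the paper's N = {1,2,...}
   is order-isomorphic to nat via k |-> k-1, so B^m_n corresponds to
   bset (m-1) (n-1). *)
Definition baire := nat -> nat.
Definition bset := baire -> Prop.
Definition family := bset -> Prop.

Definition B (m n : nat) : bset := fun f => f n = m.

(* a literal: (true, m, n) stands for B^m_n, (false, m, n) for its complement *)
Definition lit_sem (l : bool * nat * nat) : bset :=
  match l with
  | (true, m, n) => B m n
  | (false, m, n) => fun f => ~ B m n f
  end.

Definition inA (X : bset) : Prop :=
  exists ts : list (list (bool * nat * nat)),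
    ts <> [] /\ (forall t, In t ts -> t <> []) /\
    forall f, X f <-> exists t, In t ts /\ forall l, In l t -> lit_sem l f.

Definition PiOf (F : family) : family :=
  fun X => exists Xs : nat -> bset, (forall k, F (Xs k)) /\
    forall f, X f <-> forall k, Xs k f.
Definition SigmaOf (F : family) : family :=
  fun X => exists Xs : nat -> bset, (forall k, F (Xs k)) /\
    forall f, X f <-> exists k, Xs k f.

Definition fam_eq (F G : family) : Prop := forall X, F X <-> G X.

(* Ordinals are represented as elements of a well-ordered type (W, lt):
   the ordinal denoted by w is the order type of { v | lt v w }. *)
Section Hierarchy.
Variables (W : Type) (lt : W -> W -> Prop).

Definition is_zero (w : W) : Prop := forall v, ~ lt v w.
Definition is_pred (v w : W) : Prop := lt v w /\ forall u, lt v u -> ~ lt u w.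
Definition is_limit (w : W) : Prop := ~ is_zero w /\ forall v, ~ is_pred v w.

(* Transfinite recursion defining Pi_w A and Sigma_w A:
   Pi_0 = Sigma_0 = A, Pi_{b+1} = Pi(Sigma_b), Sigma_{b+1} = Sigma(Pi_b),
   Pi_l = U_{b<l} Pi_b, Sigma_l = U_{b<l} Sigma_b for limit l. *)
Inductive InPi : W -> bset -> Prop :=
| InPi_zero w X : is_zero w -> inA X -> InPi w X
| InPi_succ w v X : is_pred v w ->
    (exists Xs : nat -> bset, (forall k, InSigma v (Xs k)) /\
       forall f, X f <-> forall k, Xs k f) -> InPi w X
| InPi_lim w v X : is_limit w -> lt v w -> InPi v X -> InPi w X
with InSigma : W -> bset -> Prop :=
| InSigma_zero w X : is_zero w -> inA X -> InSigma w X
| InSigma_succ w v X : is_pred v w ->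
    (exists Xs : nat -> bset, (forall k, InPi v (Xs k)) /\
       forall f, X f <-> exists k, Xs k f) -> InSigma w X
| InSigma_lim w v X : is_limit w -> lt v w -> InSigma v X -> InSigma w X.

End Hierarchy.

Definition well_order (W : Type) (lt : W -> W -> Prop) : Prop :=
  well_founded lt /\
  (forall x y z, lt x y -> lt y z -> lt x z) /\
  (forall x y, lt x y \/ x = y \/ lt y x).

Definition uncountable_below (W : Type) (lt : W -> W -> Prop) (w : W) : Prop :=
  ~ exists g : {v : W | lt v w} -> nat,
      forall a b, g a = g b -> a = b.

(* Main.v *)
Require Import Defs.
From Stdlib Require Import List PeanoNat Cantor Classical ClassicalEpsilon FunctionalExtensionality Lia.
Import ListNotations.

Inductive L : bset -> Prop :=
| L_lit X l : (forall f, X f <-> lit_sem l f) -> L X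
| L_int X (Xs : nat -> bset) : (forall k, L (Xs k)) -> (forall f, X f <-> forall k, Xs k f) -> L X
| L_un X (Xs : nat -> bset) : (forall k, L (Xs k)) -> (forall f, X f <-> exists k, Xs k f) -> L X.

Lemma L_ext X Y : L X -> (forall f, X f <-> Y f) -> L Y.
Proof.
  intros H E; destruct H as [X l H|X Xs H1 H|X Xs H1 H].
  - apply (L_lit _ l); intro f; rewrite <- E; auto.
  - apply (L_int _ Xs); auto; intro f; rewrite <- E; auto.
  - apply (L_un _ Xs); auto; intro f; rewrite <- E; auto.
Qed.

Lemma L_sub (s : nat -> nat) X : L X -> L (fun z => X (fun n => z (s n))).
Proof.
  induction 1 as [X l H|X Xs H1 IH H|X Xs H1 IH H].
  - destruct l as [[b m] n].
    apply (L_lit _ (b, m, s n)); intro f; rewrite H; destruct b; simpl; unfold B; tauto.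
  - apply (L_int _ (fun k z => Xs k (fun n => z (s n)))); auto; intro f; apply H.
  - apply (L_un _ (fun k z => Xs k (fun n => z (s n)))); auto; intro f; apply H.
Qed.

Lemma L_compl X : L X -> L (fun f => ~ X f).
Proof.
  induction 1 as [X l H|X Xs H1 IH H|X Xs H1 IH H].
  - destruct l as [[b m] n].
    apply (L_lit _ (negb b, m, n)); intro f; rewrite H; destruct b; simpl; unfold B; try tauto.

  - apply (L_un _ (fun k f => ~ Xs k f)); auto; intro f; rewrite H; split.
    + intro Hn; apply not_all_ex_not; auto.
    + intros [k Hk] Ha; auto.
  - apply (L_int _ (fun k f => ~ Xs k f)); auto; intro f; rewrite H; split.
    + intros Hn k Hk; eauto.
    + intros Ha [k Hk]; eapply Ha; eauto.
Qed.

Lemma L_eq i m : L (fun f => f i = m).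
Proof. apply (L_lit _ (true, m, i)); intro f; simpl; unfold B; tauto. Qed.

Lemma L_empty : L (fun f => False).
Proof.
  apply (L_int _ (fun k f => f 0 = k)); [intro; apply L_eq|].
  intro f; split; [tauto|]. intro H. specialize (H (S (f 0))). lia.
Qed.

Lemma L_and X Y : L X -> L Y -> L (fun f => X f /\ Y f).
Proof.
  intros HX HY. apply (L_int _ (fun k => match k with 0 => X | _ => Y end)).
  - intros [|k]; auto.
  - intro f; split; [intros [a b] [|k]; auto|intro H; split; [apply (H 0)|apply (H 1)]].
Qed.

Lemma L_or X Y : L X -> L Y -> L (fun f => X f \/ Y f).
Proof.
  intros HX HY. apply (L_un _ (fun k => match k with 0 => X | _ => Y end)).
  - intros [|k]; auto.
  - intro f; split; [intros [a|b]; [exists 0|exists 1]; auto|intros [[|k] H]; auto].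
Qed.

Definition enc (l : bool * nat * nat) : nat :=
  let '(b, m, n) := l in to_nat (to_nat (m, n), if b then 1 else 0).
Definition dec (c : nat) : bool * nat * nat :=
  let '(a, bb) := of_nat c in let '(m, n) := of_nat a in (Nat.eqb bb 1, m, n).
Lemma dec_enc l : dec (enc l) = l.
Proof.
  destruct l as [[b m] n]; unfold dec, enc. rewrite cancel_of_to, cancel_of_to.
  destruct b; reflexivity.
Qed.

Definition ev (z : baire) : baire := fun n => z (2 * n).
Definition od (z : baire) : baire := fun n => z (2 * n + 1).

Definition UB (x y : baire) : Prop :=
  exists i, forall j, lit_sem (dec (y (to_nat (i, j)))) x.

Definition Base (X : bset) : Prop :=
  exists c : nat -> nat -> bool * nat * nat,
    forall f, X f <-> exists i, forall j, lit_sem (c i j) f.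

Lemma Base_section X : Base X -> exists y, forall x, X x <-> UB x y.
Proof.
  intros [c Hc]. exists (fun n => let '(i, j) := of_nat n in enc (c i j)).
  intro x; rewrite Hc; unfold UB. split; intros [i Hi]; exists i; intro j;
  specialize (Hi j); rewrite cancel_of_to, dec_enc in *; auto.
Qed.

Lemma L_lit_sem l : L (lit_sem l).
Proof. apply (L_lit _ l); tauto. Qed.

Lemma UB_L : L (fun z => UB (ev z) (od z)).
Proof.
  unfold UB. apply (L_un _ (fun i z => forall j, lit_sem (dec (od z (to_nat (i, j)))) (ev z))); [|tauto].
  intro i. apply (L_int _ (fun j z => lit_sem (dec (od z (to_nat (i, j)))) (ev z))); [|tauto].
  intro j. set (p := 2 * to_nat (i, j) + 1).
  apply (L_un _ (fun c z => z p = c /\ lit_sem (dec c) (ev z))).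
  - intro c. apply L_and; [apply L_eq|]. apply (L_sub (fun n => 2 * n) (lit_sem (dec c))), L_lit_sem.
  - intro f; unfold od; fold p; split; [intro H; exists (f p); auto|intros [c [e H]]; subst; auto].
Qed.

Lemma A_Base X : inA X -> Base X.
Proof.
  intros [ts [Hne [Htne Hts]]].
  exists (fun i j => let t := nth i ts (hd [] ts) in nth j t (hd (true,0,0) t)).
  assert (Hin : forall i, In (nth i ts (hd [] ts)) ts).
  { intro i. destruct (Nat.lt_ge_cases i (length ts)).
    - apply nth_In; auto.
    - rewrite nth_overflow by auto. destruct ts; [congruence|simpl; auto]. }
  assert (Hin2 : forall (t : list (bool*nat*nat)) j, t <> [] -> In (nth j t (hd (true,0,0) t)) t).
  { intros t j Ht. destruct (Nat.lt_ge_cases j (length t)).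
    - apply nth_In; auto.
    - rewrite nth_overflow by auto. destruct t; [congruence|simpl; auto]. }
  intro f; rewrite Hts; split.
  - intros [t [Ht Hl]]. destruct (In_nth ts t (hd [] ts) Ht) as [i [_ Hi]].
    exists i; intro j; simpl. rewrite Hi. apply Hl, Hin2, Htne; auto.
  - intros [i Hi]. exists (nth i ts (hd [] ts)); split; auto.
    intros l Hl. destruct (In_nth _ l (hd (true,0,0) (nth i ts (hd [] ts))) Hl) as [j [_ Hj]].
    rewrite <- Hj; apply Hi.
Qed.

Lemma Base_L X : Base X -> L X.
Proof.
  intros [c Hc]. apply (L_un _ (fun i f => forall j, lit_sem (c i j) f)); [|auto].
  intro i; apply (L_int _ (fun j f => lit_sem (c i j) f)); [|tauto].
  intro j; apply L_lit_sem.
Qed.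

Definition tag (y : baire) k := y (to_nat (k, 0)).
Definition sub (y : baire) k : baire := fun j => y (to_nat (k, S j)).

Lemma L_subcode (P : baire -> baire -> Prop) k :
  L (fun z => P (ev z) (od z)) -> L (fun z => P (ev z) (sub (od z) k)).
Proof.
  intro H. set (s := fun m => if Nat.odd m then 2 * to_nat (k, S (Nat.div2 m)) + 1 else m).
  apply (L_ext _ _ (L_sub s _ H)). intro z.
  assert (E1 : ev (fun n => z (s n)) = ev z).
  { apply functional_extensionality; intro n; unfold ev, s. rewrite Nat.odd_even; auto. }
  assert (E2 : od (fun n => z (s n)) = sub (od z) k).
  { apply functional_extensionality; intro n; unfold od, sub, s.
    rewrite Nat.odd_odd, Nat.div2_odd'; auto. }
  rewrite E1, E2; tauto.
Qed.

Lemma choice' {A B : Type} (R : A -> B -> Prop) :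
  (forall a, exists b, R a b) -> exists f : A -> B, forall a, R a (f a).
Proof.
  intro H. exists (fun a => proj1_sig (constructive_indefinite_description _ (H a))).
  intro a. exact (proj2_sig (constructive_indefinite_description _ (H a))).
Qed.

Inductive UP (W : Type) (lt : W -> W -> Prop) (w : W) (g : {v : W | lt v w} -> nat)
  : W -> baire -> baire -> Prop :=
| UP_i b x y : (forall k, (tag y k = 0 /\ UB x (sub y k)) \/
     (exists v (h : lt v w), lt v b /\ tag y k = S (g (exist _ v h)) /\ US W lt w g v x (sub y k)))
     -> UP W lt w g b x y
with US (W : Type) (lt : W -> W -> Prop) (w : W) (g : {v : W | lt v w} -> nat)
  : W -> baire -> baire -> Prop :=
| US_i b x y : (exists k, (tag y k = 0 /\ UB x (sub y k)) \/
     (exists v (h : lt v w), lt v b /\ tag y k = S (g (exist _ v h)) /\ UP W lt w g v x (sub y k)))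
     -> US W lt w g b x y.

Inductive P' (W : Type) (lt : W -> W -> Prop) : W -> bset -> Prop :=
| P'_i b X (Xs : nat -> bset) : (forall k, Base (Xs k) \/ exists v, lt v b /\ S' W lt v (Xs k)) ->
    (forall f, X f <-> forall k, Xs k f) -> P' W lt b X
with S' (W : Type) (lt : W -> W -> Prop) : W -> bset -> Prop :=
| S'_i b X (Xs : nat -> bset) : (forall k, Base (Xs k) \/ exists v, lt v b /\ P' W lt v (Xs k)) ->
    (forall f, X f <-> exists k, Xs k f) -> S' W lt b X.

Lemma In_P' W lt (wf : well_founded lt) (tr : forall x y z, lt x y -> lt y z -> lt x z) :
  forall b, (forall X, InPi W lt b X -> P' W lt b X) /\ (forall X, InSigma W lt b X -> S' W lt b X).
Proof.
  assert (BP : forall b X, Base X -> P' W lt b X /\ S' W lt b X).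
  { intros b X HX; split; [apply (P'_i _ _ b X (fun _ => X))|apply (S'_i _ _ b X (fun _ => X))];
    auto; intro f; [split; auto; intro H; apply (H 0)|split; [exists 0|intros [_ ?]]; auto]. }
  assert (MP : forall v b X, lt v b -> (P' W lt v X -> P' W lt b X) /\ (S' W lt v X -> S' W lt b X)).
  { intros v b X Hvb; split; intro H; inversion H; subst.
    - apply (P'_i _ _ b X Xs); auto. intro k; destruct (H0 k) as [?|[u [Hu ?]]]; auto.
      right; exists u; split; eauto.
    - apply (S'_i _ _ b X Xs); auto. intro k; destruct (H0 k) as [?|[u [Hu ?]]]; auto.
      right; exists u; split; eauto. }
  intro b; induction b as [b IH] using (well_founded_ind wf).
  split; intros X H; inversion H; subst.
  - apply BP, A_Base; auto.
  - destruct H1 as [Xs [HXs E]]. apply (P'_i _ _ b X Xs); auto.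
    intro k; right; exists v; split; [apply H0|]. apply (IH v); [apply H0|auto].
  - apply (MP v); auto. apply (IH v); auto.
  - apply BP, A_Base; auto.
  - destruct H1 as [Xs [HXs E]]. apply (S'_i _ _ b X Xs); auto.
    intro k; right; exists v; split; [apply H0|]. apply (IH v); [apply H0|auto].
  - apply (MP v); auto. apply (IH v); auto.
Qed.

Lemma keq W lt w (g : {v : W | lt v w} -> nat) (ginj : forall a c, g a = g c -> a = c)
  (b : W) (t : nat) (yk : baire) (Z : bset) (R : W -> baire -> baire -> Prop) :
  ((t = 0 /\ forall x, Z x <-> UB x yk) \/
   (exists v (h : lt v w), lt v b /\ t = S (g (exist _ v h)) /\ forall x, Z x <-> R v x yk)) ->
  forall x, Z x <-> ((t = 0 /\ UB x yk) \/
   (exists v (h : lt v w), lt v b /\ t = S (g (exist _ v h)) /\ R v x yk)).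
Proof.
  intros [[Ht HZ]|[v [h [Hv [Ht HZ]]]]] x; rewrite HZ; split.
  - intro; left; auto.
  - intros [[_ ?]|[v [h [_ [Ht' _]]]]]; auto; congruence.
  - intro; right; exists v, h; auto.
  - intros [[Ht' _]|[v' [h' [_ [Ht' HR]]]]]; [congruence|].
    rewrite Ht in Ht'; injection Ht' as Ht'. apply ginj in Ht'.
    injection Ht' as ->. auto.
Qed.

Lemma section W lt w (g : {v : W | lt v w} -> nat) (ginj : forall a c, g a = g c -> a = c)
  (wf : well_founded lt) (tr : forall x y z, lt x y -> lt y z -> lt x z) :
  forall b, (forall v, lt v b -> lt v w) ->
  (forall X, P' W lt b X -> exists y, forall x, X x <-> UP W lt w g b x y) /\
  (forall X, S' W lt b X -> exists y, forall x, X x <-> US W lt w g b x y).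
Proof.
  intro b; induction b as [b IH] using (well_founded_ind wf); intro Hb.
  assert (Hk : forall (Xs : nat -> bset) (Q : W -> bset -> Prop) (R : W -> baire -> baire -> Prop),
    (forall v, lt v b -> forall Y, Q v Y -> exists y, forall x, Y x <-> R v x y) ->
    (forall k, Base (Xs k) \/ exists v, lt v b /\ Q v (Xs k)) ->
    exists y : baire, forall k x, Xs k x <-> ((tag y k = 0 /\ UB x (sub y k)) \/
      (exists v (h : lt v w), lt v b /\ tag y k = S (g (exist _ v h)) /\ R v x (sub y k)))).
  { intros Xs Q R HQ H0.
    assert (H1 : forall k, exists p : nat * baire,
      (fst p = 0 /\ forall x, Xs k x <-> UB x (snd p)) \/
      (exists v (h : lt v w), lt v b /\ fst p = S (g (exist _ v h)) /\ forall x, Xs k x <-> R v x (snd p))).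
    { intro k; destruct (H0 k) as [HB|[v [Hv HQv]]].
      - destruct (Base_section _ HB) as [y Hy]; exists (0, y); left; auto.
      - destruct (HQ v Hv _ HQv) as [y Hy]. exists (S (g (exist _ v (Hb v Hv))), y).
        right; exists v, (Hb v Hv); auto. }
    destruct (choice' _ H1) as [F HF].
    exists (fun n => let '(k, j) := of_nat n in match j with 0 => fst (F k) | S j' => snd (F k) j' end).
    intros k.
    assert (Et : tag (fun n => let '(k, j) := of_nat n in match j with 0 => fst (F k) | S j' => snd (F k) j' end) k = fst (F k)).
    { unfold tag; rewrite cancel_of_to; reflexivity. }
    assert (Es : sub (fun n => let '(k, j) := of_nat n in match j with 0 => fst (F k) | S j' => snd (F k) j' end) k = snd (F k)).
    { apply functional_extensionality; intro j; unfold sub; rewrite cancel_of_to; reflexivity. }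
    rewrite Et, Es. apply (keq W lt w g ginj b _ _ _ R), HF. }
  split; intros X H; inversion H; subst.
  - destruct (Hk Xs (S' W lt) (US W lt w g)) as [y Hy]; auto.
    + intros v Hv Y HY. apply (IH v Hv); auto. intros u Hu; apply (tr _ v); auto.
    + exists y; intro x; rewrite H1; split.
      * intro Ha; constructor; intro k; apply Hy; auto.
      * intros Hu k; inversion Hu; subst; apply Hy; auto.
  - destruct (Hk Xs (P' W lt) (UP W lt w g)) as [y Hy]; auto.
    + intros v Hv Y HY. apply (IH v Hv); auto. intros u Hu; apply (tr _ v); auto.
    + exists y; intro x; rewrite H1; split.
      * intros [k Hk']; constructor; exists k; apply Hy; auto.
      * intros Hu; inversion Hu; subst. destruct H2 as [k Hk']; exists k; apply Hy; auto.
Qed.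

Lemma L_expart W lt w (g : {v : W | lt v w} -> nat) (ginj : forall a c, g a = g c -> a = c)
  (b : W) (R : W -> baire -> baire -> Prop) k :
  (forall v, lt v b -> L (fun z => R v (ev z) (od z))) ->
  L (fun z => (tag (od z) k = 0 /\ UB (ev z) (sub (od z) k)) \/
     (exists v (h : lt v w), lt v b /\ tag (od z) k = S (g (exist _ v h)) /\ R v (ev z) (sub (od z) k))).
Proof.
  intro IH. apply L_or.
  - apply L_and; [apply L_eq|]. apply (L_subcode UB k UB_L).
  - apply (L_un _ (fun n z => tag (od z) k = S n /\
       exists v (h : lt v w), lt v b /\ g (exist _ v h) = n /\ R v (ev z) (sub (od z) k))).
    + intro n. apply L_and; [apply L_eq|].
      destruct (classic (exists v (h : lt v w), lt v b /\ g (exist _ v h) = n)) as [[v [h [Hv Hg]]]|Hn].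
      * apply (L_ext _ _ (L_subcode (R v) k (IH v Hv))). intro z; split.
        -- intro; exists v, h; auto.
        -- intros [v' [h' [_ [Hg' HR]]]]. rewrite <- Hg' in Hg. apply ginj in Hg.
           injection Hg as ->. auto.
      * apply (L_ext _ _ L_empty). intro z; split; [tauto|].
        intros [v [h [Hv [Hg _]]]]; apply Hn; exists v, h; auto.
    + intro z; split.
      * intros [v [h [Hv [Ht HR]]]]. exists (g (exist _ v h)); split; auto. exists v, h; auto.
      * intros [n [Ht [v [h [Hv [Hg HR]]]]]]. exists v, h; subst; auto.
Qed.

Lemma code_L W lt w (g : {v : W | lt v w} -> nat) (ginj : forall a c, g a = g c -> a = c)
  (wf : well_founded lt) :
  forall b, L (fun z => UP W lt w g b (ev z) (od z)) /\ L (fun z => US W lt w g b (ev z) (od z)).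
Proof.
  intro b; induction b as [b IH] using (well_founded_ind wf). split.
  - eapply L_ext.
    + apply (L_int (fun z => forall k, (tag (od z) k = 0 /\ UB (ev z) (sub (od z) k)) \/
       (exists v (h : lt v w), lt v b /\ tag (od z) k = S (g (exist _ v h)) /\
          US W lt w g v (ev z) (sub (od z) k))) (fun k z => (tag (od z) k = 0 /\ UB (ev z) (sub (od z) k)) \/
       (exists v (h : lt v w), lt v b /\ tag (od z) k = S (g (exist _ v h)) /\
          US W lt w g v (ev z) (sub (od z) k)))); [|intro; reflexivity].
      intro k; apply L_expart; auto. intros v Hv; apply (IH v Hv).
    + intro z; split; [intro; constructor; auto|intro Hu; inversion Hu; auto].
  - eapply L_ext.
    + apply (L_un (fun z => exists k, (tag (od z) k = 0 /\ UB (ev z) (sub (od z) k)) \/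
       (exists v (h : lt v w), lt v b /\ tag (od z) k = S (g (exist _ v h)) /\
          UP W lt w g v (ev z) (sub (od z) k))) (fun k z => (tag (od z) k = 0 /\ UB (ev z) (sub (od z) k)) \/
       (exists v (h : lt v w), lt v b /\ tag (od z) k = S (g (exist _ v h)) /\
          UP W lt w g v (ev z) (sub (od z) k)))); [|intro; reflexivity].
      intro k; apply L_expart; auto. intros v Hv; apply (IH v Hv).
    + intro z; split; [intro; constructor; auto|intro Hu; inversion Hu; auto].
Qed.

Lemma A_In W lt (wf : well_founded lt) :
  forall b, (forall X, inA X -> InPi W lt b X) /\ (forall X, inA X -> InSigma W lt b X).
Proof.
  intro b; induction b as [b IH] using (well_founded_ind wf).
  destruct (classic (is_zero W lt b)) as [Hz|Hz].
  - split; intros; [apply InPi_zero|apply InSigma_zero]; auto.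
  - destruct (classic (exists v, is_pred W lt v b)) as [[v Hv]|Hp].
    + split; intros X HX.
      * apply (InPi_succ _ _ b v); auto. exists (fun _ => X); split.
        -- intro; apply (IH v); [apply Hv|auto].
        -- intro f; split; auto; intro H; apply (H 0).
      * apply (InSigma_succ _ _ b v); auto. exists (fun _ => X); split.
        -- intro; apply (IH v); [apply Hv|auto].
        -- intro f; split; [exists 0|intros [_ ?]]; auto.
    + assert (Hl : is_limit W lt b).
      { split; auto. intros v Hv; apply Hp; eauto. }
      unfold is_zero in Hz. apply not_all_ex_not in Hz. destruct Hz as [v Hv].
      apply NNPP in Hv.
      split; intros X HX; [apply (InPi_lim _ _ b v)|apply (InSigma_lim _ _ b v)]; auto;
      apply (IH v Hv); auto.
Qed.

Lemma L_fam (F : family) : (forall X, inA X -> F X) -> fam_eq (PiOf F) F ->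
  fam_eq F (SigmaOf F) -> forall X, L X -> F X.
Proof.
  intros HA HP HS X H; induction H as [X l H|X Xs H1 IH H|X Xs H1 IH H].
  - apply HA. exists [[l]]; split; [congruence|split].
    + intros t [<-|[]]; congruence.
    + intro f; rewrite H; split.
      * intro; exists [l]; split; [left; auto|intros l' [<-|[]]; auto].
      * intros [t [[<-|[]] Ht]]; apply Ht; left; auto.
  - apply HP; exists Xs; auto.
  - apply HS; exists Xs; auto.
Qed.

Lemma diag (U : baire -> baire -> Prop) (F : family) :
  (forall X, L X -> F X) -> (forall X, F X -> exists y, forall x, X x <-> U x y) ->
  L (fun z => U (ev z) (od z)) -> False.
Proof.
  intros HL Hs HU.
  assert (HD : L (fun x => ~ U x x)).
  { apply (L_ext _ _ (L_compl _ (L_sub Nat.div2 _ HU))). intro x.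
    assert (E1 : ev (fun n => x (Nat.div2 n)) = x).
    { apply functional_extensionality; intro n; unfold ev; rewrite Nat.div2_even; auto. }
    assert (E2 : od (fun n => x (Nat.div2 n)) = x).
    { apply functional_extensionality; intro n; unfold od; rewrite Nat.div2_odd'; auto. }
    rewrite E1, E2; tauto. }
  destruct (Hs _ (HL _ HD)) as [y Hy]. specialize (Hy y). tauto.
Qed.

Theorem proposition5p28 (W : Type) (lt : W -> W -> Prop) (w : W) :
  well_order W lt ->
  ((fam_eq (PiOf (InPi W lt w)) (InPi W lt w) /\
    fam_eq (InPi W lt w) (SigmaOf (InPi W lt w)))
   \/
   (fam_eq (PiOf (InSigma W lt w)) (InSigma W lt w) /\
    fam_eq (InSigma W lt w) (SigmaOf (InSigma W lt w)))) ->
  uncountable_below W lt w.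
Proof.
  intros [wf [tr _]] Hc [g ginj].
  destruct (section W lt w g ginj wf tr w (fun v h => h)) as [SP SS].
  destruct (code_L W lt w g ginj wf w) as [CP CS].
  destruct (A_In W lt wf w) as [AP AS].
  destruct (In_P' W lt wf tr w) as [IP IS].
  destruct Hc as [[HP HS]|[HP HS]].
  - apply (diag (UP W lt w g w) (InPi W lt w)); [apply L_fam; auto| |exact CP].
    intros X HX; apply SP, IP, HX.
  - apply (diag (US W lt w g w) (InSigma W lt w)); [apply L_fam; auto| |exact CS].
    intros X HX; apply SS, IS, HX.
Qed.
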